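(* Let $w$ be a word and let $v_x, v_y$ be vertices of $G(w)$ with $\mathrm{dist}(v_x, v_y) = d$. Let $\chi_i$ denote the index of the $i$-th occurrence of $x$ in $w$ and $\gamma_j$ the index of the $j$-th occurrence of $y$ in $w$. Then for every $i$ such that $\gamma_i$ exists: if $\chi_{i-d}$ exists then $\chi_{i-d} \le \gamma_i$, and if $\chi_{i+d}$ exists then $\gamma_i \le \chi_{i+d}$.
   Context: For a set of symbols $\mathcal S$, $\pi_{\mathcal S}(w)$ is the subsequence of $w$ consisting of all occurrences of symbols in $\mathcal S$. Symbols $x,y$ alternate in $w$ if $\pi_{\{x,y\}}(w) \in \{(xy)^k, (xy)^kx, (yx)^k, (yx)^ky : k \ge 0\}$. $G(w)$ has one vertex $v_a$ per symbol $a$ of the alphabet and undirected edge $(v_x,v_y)$ iff $x\neq y$ alternate in $w$; $\mathrm{dist}$ is the shortest-path distance in $G(w)$. *)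

(* Defs.v *)
From mathcomp Require Import all_boot.
Set Implicit Arguments. Unset Strict Implicit. Unset Printing Implicit Defensive.

Section Words.
Variable A : eqType.

Definition proj2 (x y : A) (w : seq A) : seq A :=
  filter (fun c => (c == x) || (c == y)) w.

Definition altk (x y : A) (k : nat) : seq A := flatten (nseq k [:: x; y]).

Definition alternate (x y : A) (w : seq A) : Prop :=
  exists k : nat,
    let s := proj2 x y w in
    s = altk x y k \/ s = rcons (altk x y k) x \/
    s = altk y x k \/ s = rcons (altk y x k) y.

Definition gedge (w : seq A) (x y : A) : Prop := x <> y /\ alternate x y w.

Inductive gwalk (w : seq A) : A -> A -> nat -> Prop :=
| gwalk0 x : gwalk w x x 0
| gwalkS x y z n : gedge w x y -> gwalk w y z n -> gwalk w x z n.+1.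

Definition gdist (w : seq A) (x y : A) (d : nat) : Prop :=
  gwalk w x y d /\ forall m, m < d -> ~ gwalk w x y m.

(* p (0-based position in w) is the index of the i-th occurrence of x in w,
   occurrences counted from 1 *)
Definition is_occ (w : seq A) (x : A) (i p : nat) : Prop :=
  1 <= i /\ p < size w /\ nth x w p = x /\ count (pred1 x) (take p w) = i.-1.

End Words.

(* Main.v *)
Require Import Defs.
From mathcomp Require Import all_boot.
From mathcomp Require Import zify.

Section L.
Variable A : eqType.

Lemma altk_take (a b : A) k n :
  let t := take n (altk a b k) in
  count (pred1 a) t <= count (pred1 b) t + 1 /\
  count (pred1 b) t <= count (pred1 a) t + 1.
Proof.
elim: k n => [|k IH] n /=; first by case: n.
case: n => [|[|m]] /=; first by [].
  by rewrite eqxx; case: (a == b).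
have [H1 H2] := IH m.
rewrite /altk in H1 H2.
case: (eqVneq a b) => [->|h]; first by rewrite eqxx /=; lia.
rewrite eqxx ?eqxx ?(eq_sym b a) ?(negbTE h) /=; lia.
Qed.

Lemma altkS (a b : A) k : altk a b k.+1 = altk a b k ++ [:: a; b].
Proof.
elim: k => [|k IH] //.
by rewrite /altk /= -/(altk a b k) -/(altk a b k.+1) in IH *; rewrite IH.
Qed.

Lemma alt_prefix (a b : A) (s t : seq A) :
  (exists k, s ++ t = altk a b k \/ s ++ t = rcons (altk a b k) a) ->
  count (pred1 a) s <= count (pred1 b) s + 1 /\
  count (pred1 b) s <= count (pred1 a) s + 1.
Proof.
case=> k [] E.
  have := altk_take a b k (size s).
  by rewrite -E take_size_cat.
have E2 : s ++ (t ++ [:: b]) = altk a b k.+1.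
  by rewrite catA E altkS -cats1 -catA.
have := altk_take a b k.+1 (size s).
by rewrite -E2 take_size_cat.
Qed.

Lemma edge_bound (w : seq A) a b : gedge w a b -> forall p,
  count (pred1 a) (take p w) <= count (pred1 b) (take p w) + 1 /\
  count (pred1 b) (take p w) <= count (pred1 a) (take p w) + 1.
Proof.
move=> [_ [k Hk]] p.
have cf : forall c, (c == a) || (c == b) ->
   count (pred1 c) (take p w) = count (pred1 c) (proj2 a b (take p w)).
  move=> c hc; rewrite /proj2 count_filter; apply: eq_count => z /=.
  by case: eqVneq => [->|] //=; rewrite hc.
rewrite !cf ?eqxx ?orbT //.
have E : proj2 a b w = proj2 a b (take p w) ++ proj2 a b (drop p w).
  by rewrite /proj2 -filter_cat cat_take_drop.
move: Hk; rewrite /= E => Hk.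
case: Hk => [H|[H|[H|H]]].
- by apply: alt_prefix; exists k; left; exact: H.
- by apply: alt_prefix; exists k; right; exact: H.
- have [? ?] : count (pred1 b) (proj2 a b (take p w)) <= count (pred1 a) (proj2 a b (take p w)) + 1 /\
     count (pred1 a) (proj2 a b (take p w)) <= count (pred1 b) (proj2 a b (take p w)) + 1.
    by apply: alt_prefix; exists k; left; exact: H.
  by split.
- have [? ?] : count (pred1 b) (proj2 a b (take p w)) <= count (pred1 a) (proj2 a b (take p w)) + 1 /\
     count (pred1 a) (proj2 a b (take p w)) <= count (pred1 b) (proj2 a b (take p w)) + 1.
    by apply: alt_prefix; exists k; right; exact: H.
  by split.
Qed.

Lemma walk_bound (w : seq A) x y n : gwalk w x y n -> forall p,
  count (pred1 x) (take p w) <= count (pred1 y) (take p w) + n /\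
  count (pred1 y) (take p w) <= count (pred1 x) (take p w) + n.
Proof.
elim=> [z|a b c m He _ IH] p; first by lia.
have [h1 h2] := @edge_bound w a b He p; have [h3 h4] := IH p; lia.
Qed.

Lemma N_mono (w : seq A) a p q : p <= q ->
  count (pred1 a) (take p w) <= count (pred1 a) (take q w).
Proof.
move=> pq; rewrite -(cat_take_drop p (take q w)) take_takel // count_cat.
exact: leq_addr.
Qed.

Lemma N_succ (w : seq A) a p : p < size w -> nth a w p = a ->
  count (pred1 a) (take p.+1 w) = (count (pred1 a) (take p w)).+1.
Proof.
move=> hp hn; rewrite (take_nth a hp) -cats1 count_cat hn /= eqxx; lia.
Qed.

End L.

Theorem lemma7 (A : eqType) (w : seq A) (x y : A) (d : nat) :
  gdist w x y d ->
  forall (i g : nat), is_occ w y i g ->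
    (forall c : nat, d < i -> is_occ w x (i - d) c -> c <= g) /\
    (forall c : nat, is_occ w x (i + d) c -> g <= c).
Proof.
move=> [Hw _] i g [i1 [gs [gn gc]]]; split.
- move=> c di [_ [cs [cn cc]]].
  rewrite leqNgt; apply/negP => gc'.
  have h1 := @N_succ A w y g gs gn.
  have h2 := @N_mono A w x _ _ gc'.
  have [_ h3] := @walk_bound A w x y d Hw g.+1.
  lia.
- move=> c [_ [cs [cn cc]]].
  rewrite leqNgt; apply/negP => cg.
  have h1 := @N_succ A w x c cs cn.
  have h2 := @N_mono A w y _ _ cg.
  have [h3 _] := @walk_bound A w x y d Hw c.+1.
  lia.
Qed.
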